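(* Let $S$ be a finite set of states, $A$ a finite set of action profiles, and $Y$, $Y'$ finite sets of public signals. Let $q(\cdot\mid s)\in\Delta(S)$ for each $s\in S$ be an action-independent state transition, and let $S(s)=\{t\in S: q(t\mid s)>0\}$. Let $f(\cdot\mid s,t,a)\in\Delta(Y)$ and $f'(\cdot\mid s,t,a)\in\Delta(Y')$ for all $(s,t,a)\in S\times S\times A$, and define the monitoring structures $\Pi$ and $\Pi'$ by $$p(t,y\mid s,a)=f(y\mid s,t,a)\,q(t\mid s),\qquad p'(t',y'\mid s,a)=f'(y'\mid s,t',a)\,q(t'\mid s).$$ Suppose that for every $s\in S$ and every $t\in S(s)$ there exists $t'\in S(s)$ such that $f'$ conditional on $(s,t')$ is more WG-informative than $f$ conditional on $(s,t)$. Then $\Pi$ is a weighted garbling of $\Pi'$.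
   Context: Definitions. (i) $f'$ conditional on $(s,t')$ is more WG-informative than $f$ conditional on $(s,t)$ if there exist weights $\gamma^{y'}\ge 0$ and distributions $\phi(\cdot\mid y')\in\Delta(Y)$, for $y'\in Y'$, such that $f(y\mid s,t,a)=\sum_{y'\in Y'}\gamma^{y'}\phi(y\mid y')f'(y'\mid s,t',a)$ for all $y\in Y$ and all $a\in A$. (ii) A monitoring structure $\Pi$, given by $p(t,y\mid s,a)$ (probability that the next state is $t$ and the public signal is $y$ when the current state is $s$ and action profile $a$ is played), is a weighted garbling of $\Pi'$, given by $p'(t',y'\mid s,a)$ on $S\times Y'$, if for every $s\in S$ there exist weights $\gamma_s^{t',y'}\ge 0$ and distributions $\phi_s(\cdot,\cdot\mid t',y')\in\Delta(S\times Y)$, for $(t',y')\in S\times Y'$, such that $p(t,y\mid s,a)=\sum_{(t',y')\in S\times Y'}\gamma_s^{t',y'}\phi_s(t,y\mid t',y')\,p'(t',y'\mid s,a)$ for all $(t,y)\in S\times Y$ and all $a\in A$. *)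

(* Defs.v *)
From mathcomp Require Import all_boot all_order all_algebra.
Set Implicit Arguments. Unset Strict Implicit. Unset Printing Implicit Defensive.
Import Order.TTheory GRing.Theory Num.Theory.
Local Open Scope ring_scope.

Definition is_dist (R : realFieldType) (T : finType) (p : T -> R) : Prop :=
  (forall x, 0 <= p x) /\ \sum_(x : T) p x = 1.

(* Definition (i): f' conditional on (s,t') is more WG-informative than
   f conditional on (s,t).  f s t a y = f(y | s,t,a). *)
Definition more_WG_informative (R : realFieldType) (S A Y Y' : finType)
  (f' : S -> S -> A -> Y' -> R) (s t' : S)
  (f : S -> S -> A -> Y -> R) (t : S) : Prop :=
  exists (gamma : Y' -> R) (phi : Y' -> Y -> R),
    (forall y', 0 <= gamma y') /\ (forall y', is_dist (phi y')) /\
    (forall (y : Y) (a : A),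
        f s t a y = \sum_(y' : Y') gamma y' * phi y' y * f' s t' a y').

(* Definition (ii): monitoring structure p (p s a (t,y) = p(t,y|s,a)) is a
   weighted garbling of p'. *)
Definition weighted_garbling (R : realFieldType) (S A Y Y' : finType)
  (p : S -> A -> (S * Y)%type -> R) (p' : S -> A -> (S * Y')%type -> R) : Prop :=
  forall s : S,
  exists (gamma : (S * Y')%type -> R) (phi : (S * Y')%type -> (S * Y)%type -> R),
    (forall ty', 0 <= gamma ty') /\ (forall ty', is_dist (phi ty')) /\
    (forall (ty : (S * Y)%type) (a : A),
        p s a ty = \sum_(ty' : (S * Y')%type) gamma ty' * phi ty' ty * p' s a ty').

Definition monitoring (R : realFieldType) (S A Y : finType)
  (f : S -> S -> A -> Y -> R) (q : S -> S -> R) : S -> A -> (S * Y)%type -> R :=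
  fun s a ty => f s ty.1 a ty.2 * q s ty.1.

(* Main.v *)
Require Import Defs.
From Stdlib Require Import ClassicalEpsilon.
From mathcomp Require Import all_boot all_order all_algebra.
From mathcomp Require Import ring.
Import Order.TTheory GRing.Theory Num.Theory.
Local Open Scope ring_scope.

Lemma decomp (R : realFieldType) (X Z : finType) (M d : X -> Z -> R) :
  (forall x z, 0 <= M x z) -> (forall x, is_dist (d x)) ->
  exists (g : X -> R) (ph : X -> Z -> R),
    (forall x, 0 <= g x) /\ (forall x, is_dist (ph x)) /\
    (forall x z, M x z = g x * ph x z).
Proof.
move=> M0 dd.
exists (fun x => \sum_z M x z).
exists (fun x z => if \sum_z M x z == 0 then d x z else M x z / \sum_z M x z).
split; first by move=> x; apply: sumr_ge0.
split.
  move=> x; case: eqP => H; first exact: dd.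
  split; first by move=> z; apply: divr_ge0 => //; apply: sumr_ge0.
  by rewrite -mulr_suml divff //; apply/eqP.
move=> x z; case: eqP => H.
  have /psumr_eq0P := H; move=> /(_ (fun i _ => M0 x i)) -> //.
  by rewrite H mul0r.
by rewrite mulrC divfK //; apply/eqP.
Qed.

Theorem mainTheorem1 (R : realFieldType) (S A Y Y' : finType)
  (q : S -> S -> R)
  (f : S -> S -> A -> Y -> R) (f' : S -> S -> A -> Y' -> R)
  (hq : forall s, is_dist (q s))
  (hf : forall s t a, is_dist (f s t a))
  (hf' : forall s t a, is_dist (f' s t a))
  (hWG : forall s t, 0 < q s t ->
     exists t', 0 < q s t' /\ more_WG_informative f' s t' f t) :
  weighted_garbling (monitoring f q) (monitoring f' q).
Proof.
move=> s.
have ex : forall t, exists w : S * ((Y' -> R) * (Y' -> Y -> R)),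
   0 < q s t -> 0 < q s w.1 /\ (forall y', 0 <= w.2.1 y') /\
     (forall y', is_dist (w.2.2 y')) /\
     (forall y a, f s t a y = \sum_(y' : Y') w.2.1 y' * w.2.2 y' y * f' s w.1 a y').
  move=> t; have [qt|qt] := boolP (0 < q s t).
    have [t' [qt' [g [ph [g0 [phd E]]]]]] := hWG s t qt.
    by exists (t', (g, ph)).
  by exists (t, (fun _ => 0, fun _ _ => 0)) .
have [w wP] := (fun (X : Type) (P : S -> X -> Prop) (h : forall t, exists x, P t x) =>
   ex_intro (fun w : S -> X => forall t, P t (w t))
     (fun t => proj1_sig (constructive_indefinite_description _ (h t)))
     (fun t => proj2_sig (constructive_indefinite_description _ (h t)))) _ _ ex.
have [t0 qt0] : exists t0, 0 < q s t0.
  apply/existsP; apply: contraT; rewrite negb_exists => /forallP H.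
  have : \sum_t q s t = 0.
    apply: big1 => t _; apply/le_anti; rewrite (hq s).1 andbT.
    by have := H t; rewrite -leNgt.
  by rewrite (hq s).2 => /eqP; rewrite oner_eq0.
have [_ [_ [phd0 _]]] := wP t0 qt0.
pose M (x : S * Y') (z : S * Y) :=
  if (0 < q s z.1) && ((w z.1).1 == x.1) then
    (w z.1).2.1 x.2 * (w z.1).2.2 x.2 z.2 * q s z.1 / q s x.1 else 0.
pose d (x : S * Y') (z : S * Y) := if z.1 == t0 then (w t0).2.2 x.2 z.2 else 0.
have [||g [ph [g0 [phd E]]]] := @decomp R _ _ M d.
- move=> [t' y'] [t y]; rewrite /M /=; case: andP => // [[qt /eqP et]].
  have [_ [G [P _]]] := wP t qt.
  apply: divr_ge0; last by rewrite -et; apply: (hq s).1.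
  by rewrite !mulr_ge0 //; try apply: (P _).1; try apply: (hq s).1; try apply: G.
- move=> [t' y']; split.
    by move=> [t y]; rewrite /d /=; case: eqP => // _; apply: (phd0 _).1.
  rewrite -(pair_big xpredT xpredT (fun t y => d (t', y') (t, y))) /=.
  rewrite (bigD1 t0) //= [X in _ + X]big1 ?addr0.
    by rewrite /d /= eqxx; apply: (phd0 _).2.
  by move=> t /negPf nt; apply: big1 => y _; rewrite /d /= nt.
exists g, ph; split => //; split => //.
move=> [t y] a; rewrite /monitoring /=.
under eq_bigr => x _ do rewrite -E.
rewrite -(pair_big xpredT xpredT (fun t' y' => M (t', y') (t, y) * (f' s t' a y' * q s t'))) /=.
have [qt|qt] := boolP (0 < q s t); last first.
  have -> : q s t = 0.
    by apply/le_anti; rewrite (hq s).1 andbT; rewrite leNgt.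
  rewrite mulr0 big1 // => t' _; apply: big1 => y' _.
  by rewrite /M /= (negPf qt) mul0r.
have [qt' [_ [_ Ef]]] := wP t qt.
rewrite (bigD1 (w t).1) //= [X in _ + X]big1 ?addr0; last first.
  move=> t' nt; apply: big1 => y' _; rewrite /M /= qt /=.
  by rewrite eq_sym (negPf nt) mul0r.
rewrite Ef mulr_suml; apply: eq_bigr => y' _.
rewrite /M /= qt eqxx /=.
have qn : q s (w t).1 != 0 by rewrite gt_eqF.
by field.
Qed.
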